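(* Let $\ln_G:(0,\infty)\to\mathbb{R}$ be a continuous, strictly increasing, strictly concave function with $\ln_G(1)=0$, let $0<\alpha<1$, and for probability distributions $p=(p_1,\dots,p_W)$ define $Z_{G,\alpha}(p):=\frac{\ln_G(\sum_{i=1}^W p_i^{\alpha})}{1-\alpha}$. Then $Z_{G,\alpha}$ satisfies: (SK1) it is continuous in all arguments $p_1,\dots,p_W$; (SK2) it attains its maximum value over the probability simplex at the uniform distribution $p_i=1/W$ (indeed it is strictly concave); (SK3) $Z_{G,\alpha}(p_1,\dots,p_W,0)=Z_{G,\alpha}(p_1,\dots,p_W)$. *)

(* Defs.v *)
From HB Require Import structures.
From mathcomp Require Import all_boot all_order all_algebra.
From mathcomp Require Import all_classical all_reals all_analysis.
Set Implicit Arguments. Unset Strict Implicit. Unset Printing Implicit Defensive.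
Import Order.TTheory GRing.Theory Num.Theory.
Import numFieldNormedType.Exports.
Local Open Scope classical_set_scope.
Local Open Scope ring_scope.

Definition prob_simplex (R : realType) (n : nat) : set 'rV[R]_n :=
  [set p | (forall i, 0 <= p ord0 i) /\ \sum_(i < n) p ord0 i = 1].

(* Z_{G,alpha}(p) = ln_G(sum_i p_i^alpha) / (1 - alpha);  0 `^ alpha = 0 for alpha <> 0. *)
Definition ZG (R : realType) (lnG : R -> R) (alpha : R) (n : nat) (p : 'rV[R]_n) : R :=
  lnG (\sum_(i < n) (p ord0 i) `^ alpha) / (1 - alpha).

Definition strictly_increasing_pos (R : realType) (f : R -> R) : Prop :=
  forall x y : R, 0 < x -> x < y -> f x < f y.

Definition strictly_concave_pos (R : realType) (f : R -> R) : Prop :=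
  forall (x y t : R), 0 < x -> 0 < y -> x != y -> 0 < t -> t < 1 ->
    t * f x + (1 - t) * f y < f (t * x + (1 - t) * y).

Definition strictly_concave_on (R : realType) (n : nat) (D : set 'rV[R]_n)
  (F : 'rV[R]_n -> R) : Prop :=
  forall (p q : 'rV[R]_n) (t : R), D p -> D q -> p != q -> 0 < t -> t < 1 ->
    t * F p + (1 - t) * F q < F (t *: p + (1 - t) *: q).

(* Main.v *)
Require Import Defs.
From HB Require Import structures.
From mathcomp Require Import all_boot all_order all_algebra.
From mathcomp Require Import all_classical all_reals all_analysis.
From mathcomp Require Import ring lra.
Set Implicit Arguments. Unset Strict Implicit.
Import Order.TTheory GRing.Theory Num.Theory.
Import numFieldNormedType.Exports.
Local Open Scope classical_set_scope.
Local Open Scope ring_scope.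

Lemma pow_tangent (R : realType) (al x : R) : 0 < al -> al < 1 -> 0 <= x -> x != 1 ->
  x `^ al < al * x + (1 - al).
Proof.
move=> a0 a1 x0 x1.
have [->|xp] := eqVneq x 0.
  by rewrite powR0 ?gt_eqF// mulr0 add0r subr_gt0.
have xpos : 0 < x by rewrite lt_neqAle eq_sym xp x0.
set l := ln x.
have l0 : l != 0 by rewrite /l ln_eq0.
have -> : x `^ al = expR (al * l) by rewrite /powR gt_eqF.
have xE : x = expR (al * l) * expR ((1 - al) * l).
  rewrite -expRD -mulrDl addrC subrK mul1r /l lnK //.

have oE : 1 = expR (al * l) * expR (- (al * l)) by rewrite -expRD subrr expR0.
have h1 : 1 + (1 - al) * l < expR ((1 - al) * l).
  by apply: expR_gt1Dx; rewrite mulf_neq0 // subr_eq0 gt_eqF.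
have h2 : 1 + - (al * l) < expR (- (al * l)).
  by apply: expR_gt1Dx; rewrite oppr_eq0 mulf_neq0 // gt_eqF.
have E0 := expR_gt0 (al * l).
set E := expR (al * l) in xE oE E0 *.
set A := expR ((1 - al) * l) in xE h1.
set B := expR (- (al * l)) in oE h2.
have g1 : E * (1 + (1 - al) * l) < E * A by rewrite ltr_pM2l.
have g2 : E * (1 + - (al * l)) < E * B by rewrite ltr_pM2l.
rewrite xE.
have -> : 1 - al = (1 - al) * (E * B) by rewrite -oE mulr1.
nra.
Qed.

Lemma pow_tangent_le (R : realType) (al x : R) : 0 < al -> al < 1 -> 0 <= x ->
  x `^ al <= al * x + (1 - al).
Proof.
move=> a0 a1 x0; have [->|x1] := eqVneq x 1.
  by rewrite powR1 mulr1 subrKC.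
exact/ltW/pow_tangent.
Qed.

Lemma pow_gen (R : realType) (al a m : R) : 0 < al -> al < 1 -> 0 <= a -> 0 < m ->
  a `^ al <= m `^ al * (al * (a / m) + (1 - al)) /\
  (a != m -> a `^ al < m `^ al * (al * (a / m) + (1 - al))).
Proof.
move=> a0 a1 ap mp.
have am : a = m * (a / m) by rewrite mulrC divfK // gt_eqF.
have amp : 0 <= a / m by rewrite divr_ge0 // ltW.
have Mp : 0 < m `^ al by rewrite powR_gt0.
have -> : a `^ al = m `^ al * (a / m) `^ al by rewrite {1}am powRM // ltW.
split.
  by rewrite ler_pM2l // pow_tangent_le.
move=> nam; rewrite ltr_pM2l // pow_tangent //.
apply: contra nam => /eqP h; apply/eqP; by rewrite am h mulr1.
Qed.

Lemma pow_conc (R : realType) (al a b t : R) : 0 < al -> al < 1 -> 0 <= a -> 0 <= b ->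
  0 < t -> t < 1 -> a != b ->
  t * a `^ al + (1 - t) * b `^ al < (t * a + (1 - t) * b) `^ al.
Proof.
move=> a0 a1 ap bp t0 t1 ab.
set m := t * a + (1 - t) * b.
have mp : 0 < m.
  rewrite /m; have [a0e|an] := eqVneq a 0.
    rewrite a0e in ab *.
    have : 0 < b by rewrite lt_neqAle bp andbT.
    nra.
  have : 0 < a by rewrite lt_neqAle eq_sym an ap.
  nra.
have am : a != m.
  apply: contra ab => /eqP h; apply/eqP; rewrite /m in h; nra.
have [_ Ha] := pow_gen a0 a1 ap mp.
have [Hb _] := pow_gen a0 a1 bp mp.
have {}Ha := Ha am.
have Mp : 0 < m `^ al by rewrite powR_gt0.
have e : t * (m `^ al * (al * (a / m) + (1 - al))) +
  (1 - t) * (m `^ al * (al * (b / m) + (1 - al))) = m `^ al.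
  rewrite /m; field; rewrite -/m; exact: lt0r_neq0.
rewrite -[X in _ < X]e.
have t1p : 0 <= 1 - t by rewrite subr_ge0 ltW.
have h1 : t * a `^ al < t * (m `^ al * (al * (a / m) + (1 - al))) by rewrite ltr_pM2l.
have h2 := ler_wpM2l t1p Hb.
lra.
Qed.

Lemma pow_conc_le (R : realType) (al a b t : R) : 0 < al -> al < 1 -> 0 <= a -> 0 <= b ->
  0 < t -> t < 1 ->
  t * a `^ al + (1 - t) * b `^ al <= (t * a + (1 - t) * b) `^ al.
Proof.
move=> a0 a1 ap bp t0 t1; have [->|ab] := eqVneq a b.
  by rewrite -!mulrDl subrKC !mul1r.
exact/ltW/pow_conc.
Qed.

Lemma simplex_le1 (R : realType) n (p : 'rV[R]_n) : prob_simplex p -> forall i, p ord0 i <= 1.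
Proof.
move=> [p0 p1] i; rewrite -p1 (bigD1 i) //= lerDl sumr_ge0 // => j _; exact: p0.
Qed.

Definition SS (R : realType) (al : R) n (p : 'rV[R]_n) := \sum_(i < n) p ord0 i `^ al.

Lemma SS_ge1 (R : realType) (al : R) n (p : 'rV[R]_n) : 0 < al -> al < 1 ->
  prob_simplex p -> 1 <= SS al p.
Proof.
move=> a0 a1 hp; have [p0 p1] := hp; rewrite -{1}p1 /SS; apply: ler_sum => i _.
have [->|pn] := eqVneq (p ord0 i) 0; first by rewrite powR0 ?gt_eqF.
apply: ger1_powR; last exact: ltW.
by rewrite lt_neqAle eq_sym pn p0 simplex_le1.
Qed.

Lemma SS_conc (R : realType) (al : R) n (p q : 'rV[R]_n) t : 0 < al -> al < 1 ->
  prob_simplex p -> prob_simplex q -> p != q -> 0 < t -> t < 1 ->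
  t * SS al p + (1 - t) * SS al q < SS al (t *: p + (1 - t) *: q).
Proof.
move=> a0 a1 [p0 _] [q0 _] pq t0 t1.
have [i hi] : exists i, p ord0 i != q ord0 i.
  apply/existsP; apply: contraNT pq; rewrite negb_exists => /forallP h.
  apply/eqP/rowP => j; exact/eqP/negbNE/h.
rewrite /SS !mulr_sumr -big_split /=.
rewrite [X in _ < X](bigD1 i) //= [X in X < _](bigD1 i) //=.
apply: ltr_leD.
  by rewrite !mxE; apply: pow_conc.
apply: ler_sum => j _; rewrite !mxE; exact: pow_conc_le.
Qed.

Lemma SS_max (R : realType) (al : R) n (p : 'rV[R]_n) : 0 < al -> al < 1 -> (0 < n)%N ->
  prob_simplex p -> SS al p <= SS al (const_mx (n%:R^-1) : 'rV[R]_n).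
Proof.
move=> a0 a1 n0 [p0 p1].
have np : 0 < n%:R :> R by rewrite ltr0n.
have mp : 0 < n%:R^-1 :> R by rewrite invr_gt0.
rewrite /SS.
under [X in _ <= X]eq_bigr do rewrite mxE.
rewrite sumr_const card_ord.
apply: (@le_trans _ _ (\sum_(i < n) n%:R^-1 `^ al * (al * (p ord0 i / n%:R^-1) + (1 - al)))).
  apply: ler_sum => i _; exact: (pow_gen a0 a1 (p0 i) mp).1.
rewrite -mulr_sumr big_split /= -mulr_sumr -mulr_suml p1 sumr_const card_ord.
rewrite invrK mul1r.
have -> : al * n%:R + (1 - al) *+ n = n%:R by rewrite -[(1 - al) *+ n]mulr_natl; ring.
by rewrite mulr_natr.
Qed.
Lemma g_cont (R : realType) (al : R) : 0 < al ->
  continuous (fun x : R => (Num.max x 0) `^ al).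
Proof.
move=> a0 a.
have [apos|aneg] := ltP 0 a.
  have hc : {for a, continuous (fun x : R => x `^ al)}.
    apply: differentiable_continuous; apply/(@derivable1_diffP R R^o).

    have := (@derivable_powR R 1 al a); rewrite in_itv /= andbT => /(_ apos) h.
    exact: h.
  move/cvgrPdist_lt: hc => hc; apply/cvgrPdist_lt => e e0.
  near=> x.
  have xp : 0 < x by near: x; exact: lt_nbhsr.
  rewrite /= !max_l ?ltW //.
  near: x; exact: hc.
apply/cvgrPdist_lt => e e0.
set d := e `^ al^-1.
have d0 : 0 < d by rewrite powR_gt0.
have dE : d `^ al = e by rewrite /d -powRrM mulVf ?gt_eqF // powRr1 // ltW.
near=> x.
have hx : x < d by near: x; apply: lt_nbhsl; exact: le_lt_trans aneg d0.
rewrite /= (max_r aneg) powR0 ?gt_eqF // sub0r normrN.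
have [hx0|hx0] := leP x 0.
  by rewrite powR0 ?gt_eqF // normr0.
rewrite ger0_norm ?powR_ge0 // -dE.
by apply: gt0_ltr_powR => //; rewrite ?nnegrE ?ltW.
Unshelve. all: by end_near.
Qed.

Lemma F_cont (R : realType) (lnG : R -> R) (al : R) n
  (hl : forall y, 0 < y -> {for y, continuous lnG}) (a0 : 0 < al) :
  continuous (fun p : 'rV[R]_n =>
    lnG (Num.max (\sum_(i < n) (Num.max (p ord0 i) 0) `^ al) 1) / (1 - al)).
Proof.
move=> p.
have hs : continuous (fun p : 'rV[R]_n => \sum_(i < n) (Num.max (p ord0 i) 0) `^ al).
  apply: continuous_big; first exact: add_continuous.
  move=> i _ q.
  apply: (@continuous_comp _ _ _ (fun M : 'rV[R]_n => M ord0 i) (fun x : R => (Num.max x 0) `^ al)).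
    exact: coord_continuous.
  exact: g_cont.

have hm : {for p, continuous (fun p : 'rV[R]_n =>
    Num.max (\sum_(i < n) (Num.max (p ord0 i) 0) `^ al) 1)}.
  apply: (continuous_max (hs p)); exact: cst_continuous.
apply: (@cvgMr_tmp _ _ (nbhs p) (nbhs_filter p)).
apply: (@continuous_comp _ _ _ (fun p : 'rV[R]_n =>
    Num.max (\sum_(i < n) (Num.max (p ord0 i) 0) `^ al) 1) lnG); first exact: hm.
apply: hl; by rewrite /= lt_max ltr01 orbT.
Qed.
Lemma lnG_le (R : realType) (f : R -> R) : strictly_increasing_pos f ->
  forall x y, 0 < x -> x <= y -> f x <= f y.
Proof.
move=> hf x y x0; rewrite le_eqVlt => /predU1P[->//|xy]; exact/ltW/hf.
Qed.

Lemma lnG_conc_le (R : realType) (f : R -> R) : strictly_concave_pos f ->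
  forall x y t, 0 < x -> 0 < y -> 0 < t -> t < 1 ->
  t * f x + (1 - t) * f y <= f (t * x + (1 - t) * y).
Proof.
move=> hf x y t x0 y0 t0 t1; have [->|xy] := eqVneq x y.
  by rewrite -!mulrDl subrKC !mul1r.
exact/ltW/hf.
Qed.

Theorem mainTheorem6 (R : realType) (lnG : R -> R) (alpha : R) (W : nat)
  (lnG_cont : {within [set x : R | 0 < x], continuous lnG})
  (lnG_incr : strictly_increasing_pos lnG)
  (lnG_conc : strictly_concave_pos lnG)
  (lnG1 : lnG 1 = 0)
  (alpha_gt0 : 0 < alpha) (alpha_lt1 : alpha < 1)
  (W_gt0 : (0 < W)%N) :
  (* (SK1) continuity on the simplex *)
  {within @prob_simplex R W, continuous (@ZG R lnG alpha W)} /\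
  (* (SK2) maximum at the uniform distribution, and strict concavity *)
  (forall p, @prob_simplex R W p ->
     ZG lnG alpha p <= ZG lnG alpha (const_mx (W%:R^-1) : 'rV[R]_W)) /\
  @strictly_concave_on R W (@prob_simplex R W) (@ZG R lnG alpha W) /\
  (* (SK3) expansibility: appending a zero-probability event *)
  (forall p, @prob_simplex R W p ->
     ZG lnG alpha (row_mx p (0 : 'rV[R]_1)) = ZG lnG alpha p).
Proof.
have e : forall n (p : 'rV[R]_n), ZG lnG alpha p = lnG (SS alpha p) / (1 - alpha) by [].
have c0 : 0 < (1 - alpha)^-1 by rewrite invr_gt0 subr_gt0.
split; last split; last split.
- have hl : forall y, 0 < y -> {for y, continuous lnG}.
    move=> y y0; have := lnG_cont; rewrite continuous_open_subspace; last exact: open_gt.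
    by move/(_ y); apply; rewrite inE.
  apply: (@subspace_eq_continuous _ _ _ (fun p : 'rV[R]_W =>
    lnG (Num.max (\sum_(i < W) (Num.max (p ord0 i) 0) `^ alpha) 1) / (1 - alpha))); last first.
    exact: continuous_subspaceT (F_cont hl alpha_gt0).
  move=> p; rewrite inE => hp /=.
  have [p0 _] := hp.
  have -> : \sum_(i < W) (Num.max (p ord0 i) 0) `^ alpha = SS alpha p.
    by apply: eq_bigr => i _; rewrite max_l.
  by rewrite max_l // SS_ge1.
- move=> p hp; rewrite !e ler_pM2r //; apply: lnG_le => //.
    exact: lt_le_trans (SS_ge1 alpha_gt0 alpha_lt1 hp).
  exact: SS_max.
- move=> p q t hp hq pq t0 t1; rewrite !e !mulrA -mulrDl ltr_pM2r //.
  have Sp := SS_ge1 alpha_gt0 alpha_lt1 hp.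
  have Sq := SS_ge1 alpha_gt0 alpha_lt1 hq.
  have Sp0 := lt_le_trans ltr01 Sp; have Sq0 := lt_le_trans ltr01 Sq.
  have h1 := lnG_conc_le lnG_conc Sp0 Sq0 t0 t1.
  apply: le_lt_trans h1 _.
  apply: lnG_incr; last exact: SS_conc.
  have : 0 < 1 - t by rewrite subr_gt0.
  nra.
- move=> p hp; rewrite !e; congr (lnG _ / _).
  rewrite /SS big_split_ord /=.
  under eq_bigr do rewrite row_mxEl.
  rewrite [X in _ + X]big1 ?addr0 // => i _.
  by rewrite row_mxEr mxE powR0 // gt_eqF.
Qed.
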